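(* Assume a constant budget $\Lambda(t)=\Lambda$, $\Delta^2>0$, $\pi_0<1$ with $\pi_0\ge(1-\pi_0)/|G|$, and hypothesis (U) for the sequence $\bar c$ below. Let $e(\pi_0,G)=\sqrt{|G|\pi_0/(1-\pi_0)}-1$ and $c_{\mathrm{crit}}=\Lambda/(|\Psi(1)|\,e(\pi_0,G))$. If at some stage $t$ the semi-omniscient policy satisfies $\mathbb E[c_i(t)\mid|\Psi(1)|]\le\bar c(t)$ for all $i\in H(\Psi(t-1))$, with $\bar c(t)\ge c_{\mathrm{crit}}$, then $\mathbb E[c_i(t+1)\mid|\Psi(1)|]\le\bar c(t+1)$ for all $i\in H(\Psi(t))$, where $$\bar c(t+1)=\pi_0\,\frac{(\sigma^2/\Delta^2)(\bar c(t)+\Lambda/|\Psi(1)|)}{\sigma^2/\Delta^2+\bar c(t)+\Lambda/|\Psi(1)|}+(1-\pi_0)\,\frac{(\sigma^2/\Delta^2)\bar c(t)}{\sigma^2/\Delta^2+\bar c(t)}.$$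
   Context: Model. There are $Q$ cells. At time $1$ each cell independently contains a target with probability $p_0\in(0,1)$; $\Psi(t)$ is the set of target locations, $|\Psi(1)|\sim\mathrm{Binomial}(Q,p_0)$ constant in time, at most one target per cell. Each cell $j$ has neighbours $G(j)$ with $|G(j)|=|G|$; $H(j)=\{j\}\cup G(j)$, $G(S)=\bigcup_{j\in S}G(j)$, $H(S)=S\cup G(S)$; neighbourhoods of distinct targets are disjoint. Between stages each target independently stays with probability $\pi_0$, else moves to a uniformly chosen neighbour. Amplitudes: initial $\mathcal N(\mu_0,\sigma_0^2)$, random walk with i.i.d. $\mathcal N(0,\Delta^2)$ increments. Observations $y_i(t)=\sqrt{\lambda_i(t)}I_i(t)\theta_i(t)+n_i(t)$, $n_i(t)$ i.i.d. $\mathcal N(0,\sigma^2)$, efforts $\lambda_i(t)\ge0$ with $\sum_i\lambda_i(t)\le\Lambda$. Posterior precisions start at $c_i(1)=\sigma^2/\sigma_0^2$ and evolve by: for each target $n$ at $s^{(n)}(t)$ and each $i\in H(s^{(n)}(t))$, $1/c_i(t+1)=1/(c_{s^{(n)}(t)}(t)+\lambda_{s^{(n)}(t)}(t))+\Delta^2/\sigma^2$. Semi-omniscient policy: at stage $t$ it knows $\Psi(t-1)$, so $p_i(t)=\pi_0$ on $\Psi(t-1)$, $(1-\pi_0)/|G|$ on $G(\Psi(t-1))$, $0$ elsewhere, and allocates $\lambda^s(t)$ minimizing $\sum_ip_i(t)/(c_i(t)+\lambda_i)$ over $\lambda\ge0$, $\sum_i\lambda_i=\Lambda$. Hypothesis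 (U): for the stage $t$ in question, the precisions used to compute the allocation are uniform on $H(\Psi(t-1))$ and equal to the bounding value, $c_i(t)=\bar c(t)$ for $i\in H(\Psi(t-1))$. *)

(* Defs.v *)
From HB Require Import structures.
From mathcomp Require Import all_boot all_order all_algebra.
Set Implicit Arguments. Unset Strict Implicit. Unset Printing Implicit Defensive.
Import Order.TTheory GRing.Theory Num.Theory.
Local Open Scope ring_scope.

Section Defs.
Variables (R : rcfType) (T : finType) (Gn : T -> {set T}).

Definition Hset (j : T) : {set T} := j |: Gn j.
Definition GS (S : {set T}) : {set T} := \bigcup_(j in S) Gn j.
Definition HS (S : {set T}) : {set T} := S :|: GS S.

Definition Psi_of (K : nat) (pos : 'I_K -> T) : {set T} := [set pos n | n : 'I_K].

Definition ptarget (pi0 : R) (gsz : nat) (Psi : {set T}) (i : T) : R :=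
  if i \in Psi then pi0
  else if i \in GS Psi then (1 - pi0) / gsz%:R else 0.

Definition objective (p c lam : T -> R) : R := \sum_i p i / (c i + lam i).

Definition trans (pi0 : R) (gsz : nat) (s j : T) : R :=
  if j == s then pi0 else if j \in Gn s then (1 - pi0) / gsz%:R else 0.

(* probability of the move map m : (old cell) -> (new cell), targets at cells of
   Psi moving independently; cells without targets are mapped to themselves *)
Definition moveProb (pi0 : R) (gsz : nat) (Psi : {set T}) (m : {ffun T -> T}) : R :=
  \prod_s (if s \in Psi then trans pi0 gsz s (m s) else (m s == s)%:R).
End Defs.

Definition eG (R : rcfType) (pi0 : R) (gsz : nat) : R :=
  Num.sqrt (gsz%:R * pi0 / (1 - pi0)) - 1.

Definition ccrit (R : rcfType) (Lam : R) (K : nat) (pi0 : R) (gsz : nat) : R :=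
  Lam / (K%:R * eG pi0 gsz).

Definition cbar_next (R : rcfType) (sigma2 Delta2 pi0 Lam : R) (K : nat) (cb : R) : R :=
  pi0 * ((sigma2 / Delta2) * (cb + Lam / K%:R)) / (sigma2 / Delta2 + cb + Lam / K%:R)
  + (1 - pi0) * ((sigma2 / Delta2) * cb) / (sigma2 / Delta2 + cb).

(* Main.v *)
Require Import Defs.
From HB Require Import structures.
From mathcomp Require Import all_boot all_order all_algebra.
From mathcomp Require Import ring lra.
Import Order.TTheory GRing.Theory Num.Theory.
Local Open Scope ring_scope.

Lemma key_ineq (R : rcfType) (gsz : nat) (pi0 L cb : R) :
  (0 < gsz)%N -> pi0 < 1 -> 0 < cb -> 0 <= L -> 0 < eG pi0 gsz -> 0 < pi0 ->
  L <= cb * eG pi0 gsz ->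
  (1 - pi0) / gsz%:R / cb ^+ 2 <= pi0 / (cb + L) ^+ 2.
Proof.
move=> g0 p1 c0 L0 e0 p0 hL.
set X := gsz%:R * pi0 / (1 - pi0).
have gR : 0 < (gsz%:R : R) by rewrite ltr0n.
have X0 : 0 <= X by rewrite /X divr_ge0 ?mulr_ge0 ?subr_ge0 ?ltW.
set s := Num.sqrt X.
have s2 : s ^+ 2 = X by rewrite sqr_sqrtr.
have hs : cb + L <= cb * s.
  move: hL; rewrite /eG -/X -/s => hL; lra.
have qX : (1 - pi0) / gsz%:R * X = pi0.
  rewrite /X; field; rewrite gt_eqF // ?subr_gt0 //.
  by rewrite gt_eqF.
have cL : 0 < cb + L by lra.
rewrite ler_pdivrMr ?exprn_gt0 // mulrAC ler_pdivlMr ?exprn_gt0 //.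
have h1 : (cb + L) ^+ 2 <= cb ^+ 2 * X.
  rewrite -s2 -exprMn; apply: lerXn2r; rewrite ?nnegrE //; lra.
have q0 : 0 <= (1 - pi0) / gsz%:R by rewrite divr_ge0 ?subr_ge0 ?ltW.
apply: le_trans (ler_wpM2l q0 h1) _.
by rewrite mulrCA qX mulrC.
Qed.

Lemma opt_alloc (R : rcfType) (T : finType) (Gn : T -> {set T}) (gsz K : nat)
  (Psi : {set T}) (u lam : T -> R) (pi0 Lam cb : R) :
  (0 < gsz)%N -> (0 < K)%N -> pi0 < 1 -> (1 - pi0) / gsz%:R <= pi0 -> 0 <= Lam ->
  #|Psi| = K ->
  (forall i, i \in HS Gn Psi -> u i = cb) ->
  (forall i, 0 <= lam i) -> \sum_i lam i = Lam ->
  (forall mu : T -> R, (forall i, 0 <= mu i) -> \sum_i mu i = Lam ->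
     objective (ptarget Gn pi0 gsz Psi) u lam <= objective (ptarget Gn pi0 gsz Psi) u mu) ->
  0 < eG pi0 gsz -> ccrit Lam K pi0 gsz <= cb ->
  forall i, i \in HS Gn Psi -> lam i = if i \in Psi then Lam / K%:R else 0.
Proof.
move=> g0 K0 p1 qle L0 cardP HU lam0 lamS opt e0 cc.
set q := (1 - pi0) / gsz%:R.
have gR : 0 < (gsz%:R : R) by rewrite ltr0n.
have KR : 0 < (K%:R : R) by rewrite ltr0n.
have q0 : 0 < q by rewrite divr_gt0 // subr_gt0.
have p0 : 0 < pi0 := lt_le_trans q0 qle.
set mu := fun i => if i \in Psi then Lam / K%:R else 0.
case: (eqVneq Lam 0) => [L_eq|L_ne].
  have z := psumr_eq0P (P := predT) (fun i _ => lam0 i).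
  move=> i _; rewrite z //; last by rewrite lamS.
  by rewrite L_eq mul0r if_same.
have Lp : 0 < Lam by rewrite lt_def L_ne.
have cb0 : 0 < cb.
  apply: lt_le_trans cc; rewrite /ccrit divr_gt0 // mulr_gt0 //.
have LK0 : 0 <= Lam / K%:R by rewrite divr_ge0 // ltW.
have mu0 : forall i, 0 <= mu i by move=> i; rewrite /mu; case: ifP.
have muS : \sum_i mu i = Lam.
  rewrite /mu -big_mkcond /= sumr_const cardP. rewrite -mulr_natr; field.
  by rewrite gt_eqF.
have Hle := opt mu mu0 muS.
set p := ptarget Gn pi0 gsz Psi in Hle *.
have pHS : forall i, p i != 0 -> i \in HS Gn Psi.
  move=> i; rewrite /p /ptarget /HS in_setU; case: ifP => //= _.
  by case: ifP => //=; rewrite eqxx.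
have uP : forall i, p i != 0 -> u i = cb by move=> i /pHS /HU.
have pge : forall i, 0 <= p i.
  by move=> i; rewrite /p /ptarget; case: ifP => _; [exact: ltW|case: ifP => _ //; exact: ltW].
set nu := pi0 / (cb + Lam / K%:R) ^+ 2.
have hL : Lam / K%:R <= cb * eG pi0 gsz.
  move: cc; rewrite /ccrit => cc.
  have -> : Lam / K%:R = Lam / (K%:R * eG pi0 gsz) * eG pi0 gsz.
    by field; rewrite !gt_eqF.
  by rewrite ler_wpM2r // ltW.
have gle : forall i, p i / (u i + mu i) ^+ 2 <= nu.
  move=> i; rewrite /p /ptarget /mu; case: ifP => iP.
    rewrite HU //; by rewrite /HS in_setU iP.
  case: ifP => iG; last by rewrite mul0r divr_ge0 ?sqr_ge0 // ltW.
  rewrite HU; last by rewrite /HS in_setU iG orbT.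
  by rewrite addr0 key_ineq.
have gmu : forall i, p i / (u i + mu i) ^+ 2 * mu i = nu * mu i.
  move=> i; rewrite /mu; case: ifP => iP; last by rewrite !mulr0.
  rewrite /p /ptarget iP HU //; by rewrite /HS in_setU iP.
set d := fun i => p i * (lam i - mu i) ^+ 2 / ((u i + mu i) ^+ 2 * (u i + lam i)).
have dE : forall i, p i / (u i + lam i) - p i / (u i + mu i)
    + p i / (u i + mu i) ^+ 2 * (lam i - mu i) = d i.
  move=> i; rewrite /d; case: (eqVneq (p i) 0) => [->|pn].
    by rewrite !mul0r subrr addr0.
  rewrite (uP i pn).
  have h1 : cb + lam i != 0 by rewrite gt_eqF // ltr_wpDr.
  have h2 : cb + mu i != 0 by rewrite gt_eqF // ltr_wpDr.
  by field; rewrite h1 h2.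
have d0 : forall i, 0 <= d i.
  move=> i; rewrite /d; case: (eqVneq (p i) 0) => [->|pn]; first by rewrite !mul0r.
  rewrite (uP i pn); apply: divr_ge0; first by rewrite mulr_ge0 ?sqr_ge0.
  by rewrite mulr_ge0 ?sqr_ge0 // addr_ge0 // ltW.
have hc : \sum_i p i / (u i + mu i) ^+ 2 * (lam i - mu i) <= 0.
  rewrite (eq_bigr (fun i => p i / (u i + mu i) ^+ 2 * lam i
                      - p i / (u i + mu i) ^+ 2 * mu i)); last by move=> k _; rewrite mulrBr.
  rewrite sumrB (eq_bigr _ (fun i _ => gmu i)) -mulr_sumr muS subr_le0.
  apply: le_trans (_ : \sum_i nu * lam i <= _).
    by apply: ler_sum => k _; rewrite ler_wpM2r.
  by rewrite -mulr_sumr lamS.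
have sumd : \sum_i d i <= 0.
  rewrite -(eq_bigr _ (fun i _ => dE i)) big_split /= sumrB.
  apply: le_trans (lerD (_ : _ <= 0) hc) _; last by rewrite addr0.
  by rewrite subr_le0.
have dz := psumr_eq0P (P := predT) (fun i _ => d0 i) (le_anti (andb_true_intro (conj sumd (sumr_ge0 _ (fun i _ => d0 i))))).
move=> i iHS.
have pn : p i != 0.
  move: iHS; rewrite /HS in_setU /p /ptarget; case: ifP => iP /=; first by rewrite gt_eqF.
  by move=> ->; rewrite gt_eqF.
have := dz i isT; rewrite /d (uP i pn).
have h1 : cb + lam i != 0 by rewrite gt_eqF // ltr_wpDr.
have h2 : cb + mu i != 0 by rewrite gt_eqF // ltr_wpDr.
move/eqP; rewrite mulf_eq0 invr_eq0 mulf_eq0 (negbTE pn) sqrf_eq0 subr_eq0 /=.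
by rewrite mulf_eq0 (negbTE h1) sqrf_eq0 (negbTE h2) !orbF => /eqP.
Qed.
Lemma tan_le (R : realFieldType) (A a x : R) : 0 < A -> 0 <= a -> 0 <= x ->
  A * x / (A + x) <= A * a / (A + a) + (A ^+ 2 / (A + a) ^+ 2) * (x - a).
Proof.
move=> A0 a0 x0.
have Aa : A + a != 0 by rewrite gt_eqF // ltr_wpDr.
have Ax : A + x != 0 by rewrite gt_eqF // ltr_wpDr.
rewrite -subr_ge0.
have -> : A * a / (A + a) + A ^+ 2 / (A + a) ^+ 2 * (x - a) - A * x / (A + x)
  = A ^+ 2 * (x - a) ^+ 2 / ((A + a) ^+ 2 * (A + x)) by field; rewrite Aa Ax.
apply: divr_ge0; first by rewrite mulr_ge0 // sqr_ge0.
by rewrite mulr_ge0 // ?sqr_ge0 // addr_ge0 // ltW.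
Qed.

Lemma inv_upd (R : realFieldType) (A x y : R) : 0 < A -> 0 < x ->
  y^-1 = x^-1 + A^-1 -> y = A * x / (A + x).
Proof.
move=> A0 x0 h.
have Ax : A + x != 0 by rewrite gt_eqF // addr_gt0.
rewrite -[y]invrK h; field.
by rewrite Ax gt_eqF // gt_eqF.
Qed.

Lemma marg (R : comRingType) (T : finType) (F : T -> T -> R) (h : T -> R) (s0 : T) :
  \sum_(m : {ffun T -> T}) (\prod_s F s (m s)) * h (m s0) =
  (\sum_j F s0 j * h j) * \prod_(s | s != s0) \sum_j F s j.
Proof.
pose G s j := if s == s0 then F s j * h j else F s j.
transitivity (\sum_(m : {ffun T -> T}) \prod_s G s (m s)).
  apply: eq_bigr => m _; rewrite (bigD1 s0) //= [in RHS](bigD1 s0) //= /G eqxx.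
  rewrite mulrAC; congr (_ * _).
  by apply: eq_bigr => s /negbTE ->.
rewrite -bigA_distr_bigA (bigD1 s0) //= /G eqxx; congr (_ * _).
by apply: eq_bigr => s /negbTE ->.
Qed.
Lemma transE (R : rcfType) (T : finType) (Gn : T -> {set T}) pi0 gsz (s : T) (h : T -> R) :
  s \notin Gn s ->
  \sum_j trans Gn pi0 gsz s j * h j = pi0 * h s + (1 - pi0) / gsz%:R * \sum_(j in Gn s) h j.
Proof.
move=> ns; rewrite (bigD1 s) //= /trans eqxx; congr (_ + _).
rewrite mulr_sumr.
transitivity (\sum_(j | (j != s) && (j \in Gn s)) (1 - pi0) / gsz%:R * h j).
  rewrite big_mkcondr /=; apply: eq_bigr => j /negbTE ->.
  by case: ifP => _; rewrite ?mul0r.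
apply: eq_bigl => j; case: (eqVneq j s) => [->|] //=.
by rewrite (negbTE ns).
Qed.

Lemma ind_sum (R : rcfType) (T : finType) (s : T) : \sum_(j : T) ((j == s)%:R : R) = 1.
Proof.
rewrite (bigD1 s) //= eqxx big1 ?addr0 // => j /negbTE -> //.
Qed.

Lemma lin_sum (R : rcfType) (S : finType) (P0 u v : S -> R) (C0 C1 C2 : R) :
  \sum_w P0 w = 1 ->
  \sum_w P0 w * (C0 + C1 * u w + C2 * v w) =
  C0 + C1 * \sum_w P0 w * u w + C2 * \sum_w P0 w * v w.
Proof.
move=> h.
transitivity (\sum_w (P0 w * C0 + C1 * (P0 w * u w) + C2 * (P0 w * v w))).
  by apply: eq_bigr => w _; ring.
by rewrite !big_split /= -!mulr_sumr -mulr_suml h mul1r.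
Qed.

Lemma aff_sum (R : rcfType) (T : finType) (S : {set T}) (al be : R) (y : T -> R) :
  \sum_(j in S) (al + be * y j) = al * #|S|%:R + be * \sum_(j in S) y j.
Proof. by rewrite big_split /= sumr_const mulr_natr mulr_sumr. Qed.

Lemma trans_sum (R : rcfType) (T : finType) (Gn : T -> {set T}) (pi0 : R) gsz (s : T) :
  s \notin Gn s -> #|Gn s| = gsz -> (0 < gsz)%N -> \sum_j trans Gn pi0 gsz s j = 1.
Proof.
move=> ns cs g0; have := @transE R T Gn pi0 gsz s (fun _ => 1) ns.
rewrite (eq_bigr _ (fun j _ => mulr1 _)) => ->.
rewrite sumr_const cs mulr1 -mulr_natr mul1r; field.
by rewrite pnatr_eq0 -lt0n.
Qed.

Lemma E2_bound (R : rcfType) (T : finType) (Gn : T -> {set T}) (gsz K : nat)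
    (Om0 : finType) (P0 : Om0 -> R) (pos : Om0 -> 'I_K -> T) (c : Om0 -> T -> R) (cb : R) n :
  (forall j, #|Gn j| = gsz) -> (forall w, 0 <= P0 w) ->
  (forall n (sel : Om0 -> T), (forall w, sel w \in Hset Gn (pos w n)) ->
     \sum_w P0 w * c w (sel w) <= cb) ->
  \sum_w P0 w * \sum_(j in Gn (pos w n)) c w j <= gsz%:R * cb.
Proof.
move=> cardG P0ge Hexp.
have hE : forall w, \sum_(j in Gn (pos w n)) c w j =
    \sum_(k < gsz) c w (nth (pos w n) (enum (Gn (pos w n))) k).
  move=> w; rewrite -big_enum (big_nth (pos w n)) -cardE cardG big_mkord.
  by [].
rewrite (eq_bigr _ (fun w _ => congr1 (fun x => P0 w * x) (hE w))).
rewrite (eq_bigr (fun w => \sum_(k < gsz) P0 w * c w (nth (pos w n) (enum (Gn (pos w n))) k)));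
  last by move=> w _; rewrite mulr_sumr.
rewrite exchange_big /=.
apply: le_trans (_ : \sum_(k < gsz) cb <= _); last first.
  by rewrite sumr_const card_ord mulr_natl.
apply: ler_sum => k _; apply: Hexp => w; apply: setU1r.
rewrite -mem_enum; apply: mem_nth; by rewrite -cardE cardG.
Qed.
Arguments opt_alloc {R T Gn gsz K Psi u lam pi0 Lam cb}.
Arguments tan_le {R A a x}.
Arguments marg {R T}.
Arguments E2_bound {R T Gn gsz K Om0 P0 pos c cb}.

Theorem lemma2 (R : rcfType) (T : finType) (Gn : T -> {set T}) (gsz K : nat)
    (Om0 : finType) (P0 : Om0 -> R) (pos : Om0 -> 'I_K -> T)
    (c cU lam : Om0 -> T -> R) (c' : Om0 -> {ffun T -> T} -> T -> R)
    (pi0 sigma2 Delta2 Lam cb : R) :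
  (0 < gsz)%N -> (forall j, #|Gn j| = gsz) -> (forall j, j \notin Gn j) ->
  (0 < K)%N ->
  0 < sigma2 -> 0 < Delta2 -> pi0 < 1 -> (1 - pi0) / gsz%:R <= pi0 -> 0 <= Lam ->
  (* Om0 : history up to stage t, conditioned on |Psi(1)| = K *)
  (forall w, 0 <= P0 w) -> \sum_w P0 w = 1 ->
  (forall w, injective (pos w)) ->
  (forall w n n', n != n' -> [disjoint Hset Gn (pos w n) & Hset Gn (pos w n')]) ->
  (forall w i, 0 < c w i) ->
  (* hypothesis (U) *)
  (forall w i, i \in HS Gn (Psi_of (pos w)) -> cU w i = cb) ->
  (* semi-omniscient allocation *)
  (forall w, (forall i, 0 <= lam w i) /\ \sum_i lam w i = Lam /\
     (forall mu : T -> R, (forall i, 0 <= mu i) -> \sum_i mu i = Lam ->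
        objective (ptarget Gn pi0 gsz (Psi_of (pos w))) (cU w) (lam w)
        <= objective (ptarget Gn pi0 gsz (Psi_of (pos w))) (cU w) mu)) ->
  (* disjoint neighbourhoods at stage t *)
  (forall w m, 0 < P0 w * moveProb Gn pi0 gsz (Psi_of (pos w)) m ->
     forall n n', n != n' ->
       [disjoint Hset Gn (m (pos w n)) & Hset Gn (m (pos w n'))]) ->
  (* precision update *)
  (forall w m, 0 < P0 w * moveProb Gn pi0 gsz (Psi_of (pos w)) m ->
     forall n i, i \in Hset Gn (m (pos w n)) ->
       (c' w m i)^-1 = (c w (m (pos w n)) + lam w (m (pos w n)))^-1 + Delta2 / sigma2) ->
  (* E[c_i(t) | |Psi(1)|] <= cbar(t) for i in H(Psi(t-1)) *)
  (forall n (sel : Om0 -> T), (forall w, sel w \in Hset Gn (pos w n)) ->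
     \sum_w P0 w * c w (sel w) <= cb) ->
  (* cbar(t) >= c_crit (c_crit finite) *)
  0 < eG pi0 gsz -> ccrit Lam K pi0 gsz <= cb ->
  forall n (sel : Om0 -> {ffun T -> T} -> T),
    (forall w m, sel w m \in Hset Gn (m (pos w n))) ->
    \sum_w \sum_m P0 w * moveProb Gn pi0 gsz (Psi_of (pos w)) m * c' w m (sel w m)
      <= cbar_next sigma2 Delta2 pi0 Lam K cb.
Proof.
move=> g0 cardG notinG K0 s0 D0 p1 qle L0 P0ge P0sum injp disjH cpos HU Hopt
  Hdisj Hupd Hexp e0 cc n sel Hsel.
set A := sigma2 / Delta2.
set q := (1 - pi0) / gsz%:R.
have gR : 0 < (gsz%:R : R) by rewrite ltr0n.
have KR : 0 < (K%:R : R) by rewrite ltr0n.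
have q0 : 0 < q by rewrite divr_gt0 // subr_gt0.
have p0 : 0 < pi0 := lt_le_trans q0 qle.
have A0 : 0 < A by rewrite divr_gt0.
have cb0 : 0 <= cb.
  by apply: le_trans cc; rewrite /ccrit divr_ge0 // mulr_ge0 // ltW.
set L := Lam / K%:R.
have L0' : 0 <= L by rewrite divr_ge0 // ltW.
have cardP : forall w, #|Psi_of (pos w)| = K.
  by move=> w; rewrite /Psi_of card_imset // card_ord.
have lamE : forall w i, i \in HS Gn (Psi_of (pos w)) ->
    lam w i = if i \in Psi_of (pos w) then L else 0.
  move=> w; case: (Hopt w) => l0 [lS op].
  exact: (opt_alloc g0 K0 p1 qle L0 (cardP w) (HU w) l0 lS op e0 cc).
have lam0 : forall w i, 0 <= lam w i by move=> w; case: (Hopt w).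
have posP : forall w, pos w n \in Psi_of (pos w) by move=> w; apply: imset_f.
have lam_s : forall w, lam w (pos w n) = L.
  by move=> w; rewrite lamE ?posP // /HS in_setU posP.
have nGP : forall w j, j \in Gn (pos w n) -> j \notin Psi_of (pos w).
  move=> w j jG; apply/negP => /imsetP [n' _ jE].
  case: (eqVneq n' n) => [e|ne].
    by move: jG; rewrite jE e (negbTE (notinG _)).
  have := disjointFr (disjH w n' n ne) (setU11 _ _).
  by rewrite -jE setU1r.
have jGS : forall w j, j \in Gn (pos w n) -> j \in GS Gn (Psi_of (pos w)).
  by move=> w j jG; apply/bigcupP; exists (pos w n).
have lam_j : forall w j, j \in Gn (pos w n) -> lam w j = 0.
  move=> w j jG; rewrite lamE ?(negbTE (nGP w j jG)) //.
  by rewrite /HS in_setU jGS ?orbT.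
have trans0 : forall s j, 0 <= trans Gn pi0 gsz s j.
  move=> s j; rewrite /trans; case: ifP => _; first exact: ltW.
  by case: ifP => _ //; exact: ltW.
have mp0 : forall w m, 0 <= moveProb Gn pi0 gsz (Psi_of (pos w)) m.
  move=> w m; rewrite /moveProb; apply: prodr_ge0 => s _.
  by case: ifP => _ //; rewrite ler0n.
set f := fun x => A * x / (A + x).
apply: le_trans (_ : _ <= \sum_w \sum_m P0 w * moveProb Gn pi0 gsz (Psi_of (pos w)) m
      * f (c w (m (pos w n)) + lam w (m (pos w n)))) _.
  apply: ler_sum => w _; apply: ler_sum => m _.
  have h := mulr_ge0 (P0ge w) (mp0 w m).
  move: h; rewrite le_eqVlt => /orP [/eqP <-|hp]; first by rewrite !mul0r.
  have := Hupd w m hp n (sel w m) (Hsel w m).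
  rewrite -invf_div => /inv_upd -> //.
  by rewrite ltr_wpDr.
have stepB : forall w, \sum_m P0 w * moveProb Gn pi0 gsz (Psi_of (pos w)) m
      * f (c w (m (pos w n)) + lam w (m (pos w n))) =
    P0 w * (pi0 * f (c w (pos w n) + L) + q * \sum_(j in Gn (pos w n)) f (c w j)).
  move=> w.
  rewrite (eq_bigr (fun m => P0 w * (moveProb Gn pi0 gsz (Psi_of (pos w)) m
      * f (c w (m (pos w n)) + lam w (m (pos w n)))))); last by move=> m _; rewrite mulrA.
  rewrite -mulr_sumr; congr (_ * _).
  rewrite /moveProb (marg (fun s j => if s \in Psi_of (pos w) then trans Gn pi0 gsz s j
     else (j == s)%:R) (fun j => f (c w j + lam w j)) (pos w n)) /=.
  rewrite posP [X in _ * X]big1 ?mulr1; last first.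
    move=> s _ /=; case: (s \in Psi_of (pos w)); first by apply: trans_sum.
    exact: ind_sum.
  rewrite (@transE R T Gn pi0 gsz (pos w n) (fun j => f (c w j + lam w j))) // lam_s; congr (_ + _ * _).
  by apply: eq_bigr => j jG; rewrite lam_j // addr0.
rewrite (eq_bigr _ (fun w _ => stepB w)).
set a := cb + L.
set da := A ^+ 2 / (A + a) ^+ 2.
set db := A ^+ 2 / (A + cb) ^+ 2.
set C0 := pi0 * (f a - da * cb) + q * (gsz%:R * (f cb - db * cb)).
apply: le_trans (_ : _ <= \sum_w P0 w * (C0 + pi0 * da * c w (pos w n)
       + q * db * \sum_(j in Gn (pos w n)) c w j)) _.
  apply: ler_sum => w _; apply: ler_wpM2l => //.
  have h1 : f (c w (pos w n) + L) <= f a + da * (c w (pos w n) + L - a).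
    by apply: tan_le; rewrite ?addr_ge0 // ltW.
  have h2 : \sum_(j in Gn (pos w n)) f (c w j)
      <= (f cb - db * cb) * #|Gn (pos w n)|%:R + db * \sum_(j in Gn (pos w n)) c w j.
    rewrite -aff_sum; apply: ler_sum => j _.
    apply: le_trans (tan_le A0 cb0 (ltW (cpos w j))) _.
    rewrite le_eqVlt; apply/orP; left; apply/eqP; rewrite /db /f; ring.
  apply: le_trans (lerD (ler_wpM2l (ltW p0) h1) (ler_wpM2l (ltW q0) h2)) _.
  rewrite cardG /C0 /a le_eqVlt; apply/orP; left; apply/eqP; ring.
rewrite lin_sum //.
have E1 : \sum_w P0 w * c w (pos w n) <= cb.
  by apply: Hexp => w; exact: setU11.
have E2 := E2_bound n cardG P0ge Hexp.
have da0 : 0 <= da by rewrite /da divr_ge0 ?sqr_ge0.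
have db0 : 0 <= db by rewrite /db divr_ge0 ?sqr_ge0.
apply: le_trans (lerD (lerD (lexx C0) (ler_wpM2l _ E1)) (ler_wpM2l _ E2)) _.
- by rewrite mulr_ge0 // ltW.
- by rewrite mulr_ge0 // ltW.
rewrite /cbar_next /C0 /f /da /db /a /q /L -/A.
have h1 : A + cb != 0 by rewrite gt_eqF // ltr_wpDr.
have h2 : A + (cb + Lam / K%:R) != 0 by rewrite gt_eqF // ltr_wpDr // addr_ge0.
rewrite le_eqVlt; apply/orP; left; apply/eqP.
rewrite -!addrA in h2 *.
field.
rewrite h1 !gt_eqF // ?andbT. apply: (lt_le_trans (mulr_gt0 A0 KR)); by rewrite lerDl addr_ge0 // mulr_ge0 // ltW.
Qed.
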